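(* Let $E$ be a normed space over $\mathbb K$. Let $\ell^\infty(E)$ be the space of bounded sequences $(f_n)_{n\in\mathbb N}$ in $E$ with the norm $\|(f_n)\|=\sup_n\|f_n\|$, and $c_0(E)=\{(f_n)\in\ell^\infty(E): \|f_n\|\to0\}$. Then (1) $c_0(E)$ is a closed linear subspace of $\ell^\infty(E)$, so $\ell^\infty(E)/c_0(E)$ with the quotient norm is a normed space over $\mathbb K$; (2) $\ell^\infty(E)/c_0(E)$ is spherically complete; (3) the diagonal map $E\to\ell^\infty(E)/c_0(E)$, $x\mapsto[(x,x,x,\dots)]$, is a linear isometry. In particular every normed space over $\mathbb K$ embeds linearly isometrically into a spherically complete normed space over $\mathbb K$.
   Context: $\mathbb K$: nontrivially normed field with ultrametric absolute value; normed space over $\mathbb K$: normed vector space with $\|x+y\|\le\max(\|x\|,\|y\|)$. Spherically complete: every decreasing sequence of closed balls (radii $\ge0$) has nonempty intersection. *)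

(* Defs.v *)
From HB Require Import structures.
From mathcomp Require Import all_boot all_order all_algebra.
From mathcomp Require Import all_classical all_reals all_analysis.
Set Implicit Arguments. Unset Strict Implicit. Unset Printing Implicit Defensive.
Import Order.TTheory GRing.Theory Num.Theory.
Import numFieldNormedType.Exports.
Local Open Scope classical_set_scope.
Local Open Scope ring_scope.

Section Defs.
Context {R : realType}.

Definition ultra_absval (K : fieldType) (abs : K -> R) : Prop :=
  [/\ forall x, 0 <= abs x,
      forall x, abs x = 0 <-> x = 0,
      forall x y, abs (x * y) = abs x * abs y &
      forall x y, abs (x + y) <= Num.max (abs x) (abs y)].

Definition nontrivial_absval (K : fieldType) (abs : K -> R) : Prop :=
  exists x : K, 0 < abs x < 1.

Definition ultra_norm (K : fieldType) (abs : K -> R) (E : lmodType K)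
    (nE : E -> R) : Prop :=
  [/\ forall x, 0 <= nE x,
      forall x, nE x = 0 <-> x = 0,
      forall (a : K) x, nE (a *: x) = abs a * nE x &
      forall x y, nE (x + y) <= Num.max (nE x) (nE y)].

Variables (K : fieldType) (E : lmodType K) (nE : E -> R).

Definition linf (f : nat -> E) : Prop := exists M : R, forall n, nE (f n) <= M.

Definition supnorm (f : nat -> E) : R := sup (range (fun n => nE (f n))).

Definition c0 (f : nat -> E) : Prop := (fun n => nE (f n)) @ \oo --> (0 : R).

Definition qnorm (f : nat -> E) : R :=
  inf [set supnorm (fun n => f n - g n) | g in c0].

Definition qdist (f g : nat -> E) : R := qnorm (fun n => f n - g n).

Definition diag (x : E) : nat -> E := fun _ => x.

End Defs.

Definition closed_ball {R : realType} {X : Type} (X_in : X -> Prop)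
  (d : X -> X -> R) (c : X) (r : R) : set X :=
  [set y | X_in y /\ d y c <= r].

Definition spherically_complete {R : realType} {X : Type} (X_in : X -> Prop)
  (d : X -> X -> R) : Prop :=
  forall (c : nat -> X) (r : nat -> R),
    (forall k, X_in (c k)) -> (forall k, 0 <= r k) ->
    (forall k, closed_ball X_in d (c k.+1) (r k.+1) `<=` closed_ball X_in d (c k) (r k)) ->
    exists y, forall k, closed_ball X_in d (c k) (r k) y.

(* Main.v *)
Require Import Defs.
From HB Require Import structures.
From mathcomp Require Import all_boot all_order all_algebra.
From mathcomp Require Import all_classical all_reals all_analysis.
From mathcomp Require Import ring lra zify.
Import Order.TTheory GRing.Theory Num.Theory.
Import numFieldNormedType.Exports.
Local Open Scope classical_set_scope.
Local Open Scope ring_scope.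

Lemma fin_bound (R : realType) (u : nat -> R) N :
  exists M, forall n, (n < N)%N -> u n <= M.
Proof.
elim: N => [|N [M HM]]; first by exists 0.
exists (Num.max M (u N)) => n; rewrite ltnS leq_eqVlt => /orP[/eqP->|/HM h].
  by rewrite le_max lexx orbT.
by rewrite le_max h.
Qed.

Lemma small_inv (R : realType) (e : R) : 0 < e -> exists K : nat, K.+1%:R^-1 <= e.
Proof.
move=> e0; have h0 : 0 <= e^-1 by rewrite invr_ge0 ltW.
have := archi_boundP h0.
set K := Num.Def.archi_bound _ => h; exists K.
rewrite -[e]invrK lef_pV2 ?posrE ?invr_gt0 //.
by apply: (le_trans (ltW h)); rewrite ler_nat.
Qed.

Section Basics.
Variables (R : realType) (K : fieldType) (abs : K -> R) (E : lmodType K) (nE : E -> R).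
Hypothesis Habs : ultra_absval abs.
Hypothesis HnE : ultra_norm abs nE.

Lemma nE_ge0 x : 0 <= nE x. Proof. by case: HnE. Qed.
Lemma nE0 : nE 0 = 0. Proof. by case: HnE => _ h _ _; apply/h. Qed.
Lemma nEZ a x : nE (a *: x) = abs a * nE x. Proof. by case: HnE. Qed.
Lemma nED x y : nE (x + y) <= Num.max (nE x) (nE y). Proof. by case: HnE. Qed.
Lemma abs_ge0 x : 0 <= abs x. Proof. by case: Habs. Qed.

Lemma absN1 : abs (-1) = 1.
Proof.
case: Habs => a0 a1 aM _.
have h1 : abs 1 = 1.
  have := aM 1 1; rewrite mulr1 => h.
  have nz : abs 1 != 0 by apply/eqP => /a1 /eqP; rewrite oner_eq0.
  by apply: (mulIf nz); rewrite mul1r -h.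
have := aM (-1) (-1); rewrite mulrNN mulr1 h1 => h.
have := a0 (-1); nra.
Qed.

Lemma nEN x : nE (- x) = nE x.
Proof. by rewrite -scaleN1r nEZ absN1 mul1r. Qed.

Lemma nEDl x y : nE (x + y) <= nE x + nE y.
Proof.
apply: (le_trans (nED x y)); rewrite ge_max.
by rewrite lerDl nE_ge0 lerDr nE_ge0.
Qed.

Lemma nEB x y : nE (x - y) <= Num.max (nE x) (nE y).
Proof. by rewrite -(nEN y) nED. Qed.

Lemma c0P f :
  c0 nE f <-> forall e : R, 0 < e -> exists N, forall n, (N <= n)%N -> nE (f n) <= e.
Proof.
rewrite /c0; split.
  move=> /cvgrPdist_le H e e0; have [N _ HN] := H e e0.
  exists N => n Nn; move: (HN n Nn); rewrite /= sub0r normrN ger0_norm //; exact: nE_ge0.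
move=> H; apply/cvgrPdist_le => e e0; have [N HN] := H e e0.
exists N => // n /= Nn; rewrite sub0r normrN ger0_norm ?nE_ge0 //; exact: HN.
Qed.

Lemma c0_linf f : c0 nE f -> linf nE f.
Proof.
move=> /c0P /(_ 1 ltr01) [N HN].
have [M HM] := fin_bound _ (fun n => nE (f n)) N.
exists (Num.max M 1) => n; case: (ltnP n N) => h.
  by rewrite le_max HM.
by rewrite le_max HN ?orbT.
Qed.

Lemma linfB f g : linf nE f -> linf nE g -> linf nE (fun n => f n - g n).
Proof.
move=> [M1 H1] [M2 H2]; exists (Num.max M1 M2) => n.
apply: (le_trans (nEB _ _)); rewrite ge_max !le_max H1 H2 /= orbT //.
Qed.

Lemma linfD f g : linf nE f -> linf nE g -> linf nE (fun n => f n + g n).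
Proof.
move=> [M1 H1] [M2 H2]; exists (Num.max M1 M2) => n.
apply: (le_trans (nED _ _)); rewrite ge_max !le_max H1 H2 /= orbT //.
Qed.

Lemma c0_0 : c0 nE (fun _ => 0).
Proof. apply/c0P => e e0; exists 0%N => n _; rewrite nE0; exact: ltW. Qed.

Lemma c0_lin a f g : c0 nE f -> c0 nE g -> c0 nE (fun n => a *: f n + g n).
Proof.
move=> /c0P Hf /c0P Hg; apply/c0P => e e0.
have ea : 0 < e / (abs a + 1) by rewrite divr_gt0 // ltr_wpDl ?abs_ge0.
have [N1 H1] := Hf _ ea; have [N2 H2] := Hg _ e0.
exists (maxn N1 N2) => n; rewrite geq_max => /andP[n1 n2].
apply: (le_trans (nED _ _)); rewrite ge_max H2 // andbT nEZ.
have := H1 n n1; have := nE_ge0 (f n); have := abs_ge0 a.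
move: (nE (f n)) (abs a) => x y y0 x0 hx.
apply: (le_trans (ler_wpM2l y0 hx)).
rewrite mulrA ler_pdivrMr ?ltr_wpDl //; nra.
Qed.

Lemma c0_sub f g : c0 nE f -> c0 nE g -> c0 nE (fun n => f n - g n).
Proof.
move=> hf hg; have := c0_lin (-1) _ _ hg hf.
by congr (c0 nE _); apply: funext => n; rewrite scaleN1r addrC.
Qed.

Lemma supnorm_ge h n : linf nE h -> nE (h n) <= supnorm nE h.
Proof.
move=> [M HM]; apply: sup_upper_bound; last by exists n.
split; first by exists (nE (h 0%N)), 0%N.
by exists M => _ [m _ <-].
Qed.

Lemma supnorm_le h M : (forall n, nE (h n) <= M) -> supnorm nE h <= M.
Proof.
move=> HM; apply: ge_sup; first by exists (nE (h 0%N)), 0%N.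
by move=> _ [m _ <-].
Qed.

Lemma supnorm_ge0 h : 0 <= supnorm nE h.
Proof.
have [hs|hs] := pselect (has_sup (range (fun n => nE (h n)))).
  apply: (le_trans (nE_ge0 (h 0%N))); apply: sup_upper_bound => //; by exists 0%N.
by rewrite /supnorm sup_out.
Qed.

Lemma qnorm_ge0 f : 0 <= qnorm nE f.
Proof.
apply: lb_le_inf; first by exists (supnorm nE (fun n => f n - 0)), (fun _ => 0) => //; exact: c0_0.
by move=> _ [g _ <-]; exact: supnorm_ge0.
Qed.

Lemma qnorm_le_sup f g : c0 nE g -> qnorm nE f <= supnorm nE (fun n => f n - g n).
Proof.
move=> hg; apply: ge_inf; last by exists g.
by exists 0 => _ [h _ <-]; exact: supnorm_ge0.
Qed.

Lemma qnorm_tail f N M : (forall n, (N <= n)%N -> nE (f n) <= M) -> qnorm nE f <= M.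
Proof.
move=> HM; have M0 : 0 <= M by apply: le_trans (HM N (leqnn N)); exact: nE_ge0.
pose g n := if (n < N)%N then f n else 0.
have hg : c0 nE g.
  apply/c0P => e e0; exists N => n; rewrite /g leqNgt => /negbTE ->.
  by rewrite nE0 ltW.
apply: (le_trans (qnorm_le_sup f g hg)); apply: supnorm_le => n; rewrite /g.
case: ltnP => h; first by rewrite subrr nE0.
by rewrite subr0 HM.
Qed.

Lemma qnorm_lt f M : linf nE f -> qnorm nE f < M ->
  exists N, forall n, (N <= n)%N -> nE (f n) <= M.
Proof.
move=> hf hlt; have [] := inf_lt _ hlt.
  by exists (supnorm nE (fun n => f n - 0)), (fun _ => 0) => //; exact: c0_0.
move=> _ [g hg <-] hs.
set s := supnorm _ _ in hs.
have d0 : 0 < M - s by rewrite subr_gt0.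
have [N HN] := (proj1 (c0P g)) hg _ d0.
exists N => n Nn.
have -> : f n = (f n - g n) + g n by rewrite subrK.
apply: (le_trans (nED _ _)); rewrite ge_max; apply/andP; split.
  apply: (le_trans (supnorm_ge _ n (linfB _ _ hf (c0_linf _ hg)))); exact: ltW.
apply: (le_trans (HN n Nn)); rewrite lerBlDr lerDl; exact: supnorm_ge0.
Qed.

Lemma QLE f M : linf nE f ->
  (qnorm nE f <= M <-> forall e : R, 0 < e -> exists N, forall n, (N <= n)%N -> nE (f n) <= M + e).
Proof.
move=> hf; split.
  move=> h e e0; apply: qnorm_lt => //; apply: (le_lt_trans h); rewrite ltrDl //.
move=> H; apply/ler_addgt0Pr => e e0; have [N HN] := H e e0; exact: qnorm_tail HN.
Qed.


Lemma c0_opp h : c0 nE h -> c0 nE (fun n => - h n).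
Proof.
move=> /c0P H; apply/c0P => e e0; have [N HN] := H e e0.
by exists N => n Nn; rewrite nEN HN.
Qed.

Lemma linfZ a f : linf nE f -> linf nE (fun n => a *: f n).
Proof.
move=> [M HM]; exists (abs a * M) => n; rewrite nEZ ler_wpM2l ?abs_ge0 //.
Qed.

Lemma c0_closed (fk : nat -> nat -> E) (g : nat -> E) :
  (forall k, c0 nE (fk k)) -> linf nE g ->
  (fun k => supnorm nE (fun n => fk k n - g n)) @ \oo --> (0 : R) -> c0 nE g.
Proof.
move=> hk hg /cvgrPdist_le hc; apply/c0P => e e0.
have [Kk _ HK] := hc e e0.
have hs := HK Kk (leqnn Kk); rewrite /= sub0r normrN ger0_norm in hs; last exact: supnorm_ge0.
have [N HN] := (proj1 (c0P _)) (hk Kk) e e0.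
exists N => n Nn.
have -> : g n = fk Kk n - (fk Kk n - g n) by rewrite opprB addrC subrK.
apply: (le_trans (nEB _ _)); rewrite ge_max HN //=.
apply: le_trans hs; apply: supnorm_ge; apply: linfB => //; exact: c0_linf.
Qed.

Lemma qnorm_le_of f g : linf nE f -> linf nE g -> c0 nE (fun n => f n - g n) ->
  qnorm nE f <= qnorm nE g.
Proof.
move=> hf hg hfg; apply/(QLE f _ hf) => e e0.
have [N1 H1] := (proj1 (QLE g (qnorm nE g) hg)) (lexx _) e e0.
have [N2 H2] := (proj1 (c0P _)) hfg e e0.
exists (maxn N1 N2) => n; rewrite geq_max => /andP[n1 n2].
have -> : f n = (f n - g n) + g n by rewrite subrK.
apply: (le_trans (nED _ _)); rewrite ge_max H1 // andbT.
apply: (le_trans (H2 n n2)); rewrite lerDr; exact: qnorm_ge0.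
Qed.

Lemma qnorm_c0_eq f g : linf nE f -> linf nE g -> c0 nE (fun n => f n - g n) ->
  qnorm nE f = qnorm nE g.
Proof.
move=> hf hg hfg; apply: le_anti; rewrite qnorm_le_of //=.
apply: qnorm_le_of => //; have := c0_opp _ hfg.
by congr (c0 nE _); apply: funext => n; rewrite opprB.
Qed.

Lemma qnorm0P f : linf nE f -> (qnorm nE f = 0 <-> c0 nE f).
Proof.
move=> hf; split.
  move=> h; apply/c0P => e e0.
  have [N HN] := (proj1 (QLE f 0 hf)) (ltac:(by rewrite h)) e e0.
  by exists N => n Nn; rewrite -[e]add0r HN.
move=> /c0P H; apply: le_anti; rewrite qnorm_ge0 andbT.
apply/(QLE f 0 hf) => e e0; have [N HN] := H e e0.
by exists N => n Nn; rewrite add0r HN.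
Qed.

Lemma qnormZ_le a f : linf nE f -> qnorm nE (fun n => a *: f n) <= abs a * qnorm nE f.
Proof.
move=> hf; apply/(QLE _ _ (linfZ a f hf)) => e e0.
have ea : 0 < e / (abs a + 1) by rewrite divr_gt0 // ltr_wpDl ?abs_ge0.
have [N HN] := (proj1 (QLE f (qnorm nE f) hf)) (lexx _) _ ea.
exists N => n Nn; rewrite nEZ.
have := HN n Nn; have := abs_ge0 a.
move: (nE (f n)) (abs a) (qnorm nE f) => x y q y0 hx.
apply: (le_trans (ler_wpM2l y0 hx)).
rewrite mulrDr lerD2l mulrA ler_pdivrMr ?ltr_wpDl //; nra.
Qed.

Lemma qnormZ a f : linf nE f -> qnorm nE (fun n => a *: f n) = abs a * qnorm nE f.
Proof.
move=> hf; apply: le_anti; rewrite qnormZ_le //=.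
have [->|a0] := eqVneq a 0.
  have -> : abs 0 = 0 by case: Habs => _ h _ _; apply/h.
  by rewrite mul0r qnorm_ge0.
have h := qnormZ_le a^-1 _ (linfZ a f hf).
have e : (fun n => a^-1 *: (a *: f n)) = f.
  by apply: funext => n; rewrite scalerA mulVf // scale1r.
rewrite e in h.
have aa : abs a * abs a^-1 = 1.
  case: Habs => _ _ aM _; rewrite -aM mulfV //.
  have := aM 1 1; rewrite mulr1 => h1.
  have nz : abs 1 != 0 by apply/eqP; case: Habs => _ h0 _ _ => /h0 /eqP; rewrite oner_eq0.
  by apply: (mulIf nz); rewrite mul1r -h1.
have := ler_wpM2l (abs_ge0 a) h; rewrite mulrA aa mul1r //.
Qed.

Lemma qnormD f g : linf nE f -> linf nE g ->
  qnorm nE (fun n => f n + g n) <= Num.max (qnorm nE f) (qnorm nE g).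
Proof.
move=> hf hg; apply/(QLE _ _ (linfD _ _ hf hg)) => e e0.
have [N1 H1] := (proj1 (QLE f (qnorm nE f) hf)) (lexx _) e e0.
have [N2 H2] := (proj1 (QLE g (qnorm nE g) hg)) (lexx _) e e0.
exists (maxn N1 N2) => n; rewrite geq_max => /andP[n1 n2].
apply: (le_trans (nED _ _)); rewrite ge_max; apply/andP; split.
  by apply: (le_trans (H1 n n1)); rewrite lerD2r le_max lexx.
by apply: (le_trans (H2 n n2)); rewrite lerD2r le_max lexx orbT.
Qed.

Lemma qnorm_diag x : qnorm nE (diag x) = nE x.
Proof.
apply: le_anti; rewrite (qnorm_tail _ 0%N) //=.
have [//|h] := leP (nE x) (qnorm nE (diag x)).
have hb : linf nE (diag x) by exists (nE x).
have [N HN] := qnorm_lt _ ((qnorm nE (diag x) + nE x) / 2) hb (ltac:(lra)).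
have := HN N (leqnn N); rewrite /diag; lra.
Qed.


Lemma inv_mono (a b : nat) : (a <= b)%N -> (b.+1%:R^-1 : R) <= a.+1%:R^-1.
Proof. by move=> h; rewrite lef_pV2 ?posrE ?ltr0Sn // ler_nat. Qed.

Arguments inv_mono {a b}.
Fixpoint Sf (Nf : nat -> nat) k := match k with 0 => Nf 0%N | k'.+1 => (Sf Nf k' + Nf k'.+1).+1 end.
Fixpoint mf (S : nat -> nat) n := match n with
  | 0 => 0%N
  | n'.+1 => if (S (mf S n').+1 <= n'.+1)%N then (mf S n').+1 else mf S n' end.

Lemma Sf_ge Nf k : (Nf k <= Sf Nf k)%N.
Proof. by case: k => //= k; lia. Qed.

Lemma Sf_strict Nf a b : (a < b)%N -> (Sf Nf a < Sf Nf b)%N.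
Proof.
elim: b => // b IH; rewrite ltnS leq_eqVlt => /orP[/eqP->|h] /=; first lia.
have := IH h; lia.
Qed.

Arguments Sf_strict Nf {a b}.
Lemma Sf_mono Nf a b : (a <= b)%N -> (Sf Nf a <= Sf Nf b)%N.
Proof. rewrite leq_eqVlt => /orP[/eqP->//|h]; have := Sf_strict Nf h; lia. Qed.
Arguments Sf_mono Nf {a b}.

Lemma Sf_geid Nf k : (k <= Sf Nf k)%N.
Proof. elim: k => // k IH; have := Sf_strict Nf (ltnSn k); lia. Qed.

Lemma mf_I1 Nf n : mf (Sf Nf) n = 0%N \/ (Sf Nf (mf (Sf Nf) n) <= n)%N.
Proof.
elim: n => [|n IH] /=; first by left.
case: ifP => h; first by right.
case: IH => [->|h2]; [by left | right; lia].
Qed.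

Lemma mf_I2 Nf n k : (Sf Nf k <= n)%N -> (k <= mf (Sf Nf) n)%N.
Proof.
elim: n k => [|n IH] k /=.
  by have := Sf_geid Nf k; lia.
move=> hk; set m := mf (Sf Nf) n in IH *.
have [hkn|hkn] := leqP (Sf Nf k) n.
  have := IH k hkn; case: ifP => _; lia.
case: (leqP k m) => hkm; first by case: ifP => _; lia.
have h1 : (Sf Nf m.+1 <= n.+1)%N by apply: leq_trans (Sf_mono Nf hkm) hk.
rewrite h1.
case: (leqP k m.+1) => // hk2.
have := Sf_strict Nf hk2 => h3.
have := IH m.+1 ltac:(lia); lia.
Qed.

Arguments mf_I2 Nf {n k}.
Lemma key_idx Nf Kb n : (Sf Nf Kb <= n)%N ->
  (Kb <= mf (Sf Nf) n)%N /\ (Nf (mf (Sf Nf) n) <= n)%N.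
Proof.
move=> h; have h1 := mf_I2 Nf h; split => //.
apply: leq_trans (Sf_ge _ _) _.
case: (mf_I1 Nf n) => [e|//]; rewrite e.
by apply: leq_trans (Sf_mono Nf (leq0n Kb)) h.
Qed.

Arguments key_idx Nf {Kb n}.
Lemma qdist_self h : linf nE h -> qdist nE h h = 0.
Proof.
move=> hh; rewrite /qdist; apply/qnorm0P; first exact: linfB.
have := c0_0; by congr (c0 nE _); apply: funext => n; rewrite subrr.
Qed.

Lemma spher : spherically_complete (linf nE) (qdist nE).
Proof.
move=> c r hc hr hsub.
have nest : forall i d, Defs.closed_ball (linf nE) (qdist nE) (c (i + d)%N) (r (i + d)%N)
   `<=` Defs.closed_ball (linf nE) (qdist nE) (c i) (r i).
  move=> i; elim => [|d IH]; first by rewrite addn0.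
  by rewrite addnS; apply: subset_trans (hsub _) IH.
have dist_le : forall i j, (i <= j)%N -> qnorm nE (fun n => c j n - c i n) <= r i.
  move=> i j hij; have := nest i (j - i)%N; rewrite subnKC // => H.
  have hj : Defs.closed_ball (linf nE) (qdist nE) (c j) (r j) (c j).
    by split => //; rewrite qdist_self.
  by have [_ b] := H _ hj.
have stepA : forall j, exists N, forall i, (i <= j)%N -> forall n, (N <= n)%N ->
    nE (c j n - c i n) <= r i + j.+1%:R^-1.
  move=> j.
  suff : forall m, exists N, forall i, (i <= m)%N -> forall n, (N <= n)%N ->
    (i <= j)%N -> nE (c j n - c i n) <= r i + j.+1%:R^-1.
    by move=> /(_ j) [N HN]; exists N => i hi n hn; apply: HN.
  have one : forall i, exists N, forall n, (N <= n)%N -> (i <= j)%N ->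
      nE (c j n - c i n) <= r i + j.+1%:R^-1.
    move=> i; case: (leqP i j) => hij; last by exists 0%N => n _; lia.
    have [N HN] := (proj1 (QLE _ _ (linfB _ _ (hc j) (hc i)))) (dist_le i j hij) _
      (ltac:(by rewrite invr_gt0 ltr0Sn) : 0 < j.+1%:R^-1 :> R).
    by exists N => n hn _; apply: HN.
  elim => [|m [N1 H1]].
    have [N HN] := one 0%N; exists N => i; rewrite leqn0 => /eqP->; exact: HN.
  have [N2 H2] := one m.+1; exists (maxn N1 N2) => i; rewrite leq_eqVlt ltnS.
  move=> /orP[/eqP->|hi] n; rewrite geq_max => /andP[n1 n2].
    exact: H2.
  exact: H1.
have [Nf HNf] := choice stepA.
pose y n := c (mf (Sf Nf) n) n.
have bound : forall Kb n, (Sf Nf Kb <= n)%N -> forall i, (i <= Kb)%N ->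
    nE (y n - c i n) <= r i + Kb.+1%:R^-1.
  move=> Kb n hn i hi; have [h1 h2] := key_idx Nf hn.
  apply: le_trans (HNf _ i (leq_trans hi h1) n h2) _.
  by rewrite lerD2l inv_mono.
have hy : linf nE y.
  have [M0 HM0] := hc 0%N.
  exists (Num.max (r 0%N + 1) M0) => n.
  have b0 : nE (y n - c 0%N n) <= r 0%N + 1.
    case: (leqP (Sf Nf 0) n) => hn.
      apply: le_trans (bound 0%N n hn 0%N (leqnn 0)) _.
      by rewrite invr1.
    have m0 : mf (Sf Nf) n = 0%N.
      case: (mf_I1 Nf n) => // h; have := Sf_mono Nf (leq0n (mf (Sf Nf) n)); lia.
    rewrite /y m0 subrr nE0; have := hr 0%N; lra.
  have -> : y n = (y n - c 0%N n) + c 0%N n by rewrite subrK.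
  apply: (le_trans (nED _ _)); rewrite ge_max !le_max b0 HM0 /= orbT //.
exists y => k; split => //; rewrite /qdist.
apply/(QLE _ _ (linfB _ _ hy (hc k))) => e e0.
have [K0 hK0] := small_inv _ _ e0.
exists (Sf Nf (maxn K0 k)) => n hn.
apply: le_trans (bound _ n hn k (leq_maxr _ _)) _.
rewrite lerD2l; apply: le_trans hK0; exact: inv_mono (leq_maxl _ _).
Qed.

End Basics.

Theorem proposition6p1 (R : realType) (K : fieldType) (abs : K -> R)
  (E : lmodType K) (nE : E -> R) :
  ultra_absval abs -> nontrivial_absval abs -> ultra_norm abs nE ->
  (* (1) c_0(E) is a closed linear subspace of l^oo(E) ... *)
  ((forall f, c0 nE f -> linf nE f) /\
   c0 nE (fun _ => 0) /\
   (forall (a : K) f g, c0 nE f -> c0 nE g -> c0 nE (fun n => a *: f n + g n)) /\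
   (forall (fk : nat -> nat -> E) (g : nat -> E),
      (forall k, c0 nE (fk k)) -> linf nE g ->
      (fun k => supnorm nE (fun n => fk k n - g n)) @ \oo --> (0 : R) ->
      c0 nE g) /\
   (* ... so l^oo(E)/c_0(E) with the quotient norm is a normed space over K *)
   (forall f g, linf nE f -> linf nE g -> c0 nE (fun n => f n - g n) ->
      qnorm nE f = qnorm nE g) /\
   (forall f, linf nE f -> 0 <= qnorm nE f) /\
   (forall f, linf nE f -> (qnorm nE f = 0 <-> c0 nE f)) /\
   (forall (a : K) f, linf nE f -> qnorm nE (fun n => a *: f n) = abs a * qnorm nE f) /\
   (forall f g, linf nE f -> linf nE g ->
      qnorm nE (fun n => f n + g n) <= Num.max (qnorm nE f) (qnorm nE g))) /\
  (* (2) l^oo(E)/c_0(E) is spherically complete *)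
  spherically_complete (linf nE) (qdist nE) /\
  (* (3) the diagonal map is a linear isometry into l^oo(E)/c_0(E) *)
  ((forall x, linf nE (diag x)) /\
   (forall (a : K) x y,
      c0 nE (fun n => diag (a *: x + y) n - (a *: diag x n + diag y n))) /\
   (forall x, qnorm nE (diag x) = nE x)).
Proof.
move=> Ha _ Hn.
split; [|split].
- split; first by move=> f; apply: c0_linf; eassumption.
  split; first by apply: c0_0; eassumption.
  split; first by move=> a f g; apply: c0_lin; eassumption.
  split; first by move=> fk g; apply: c0_closed; eassumption.
  split; first by move=> f g; apply: qnorm_c0_eq; eassumption.
  split; first by move=> f _; apply: qnorm_ge0; eassumption.
  split; first by move=> f; apply: qnorm0P; eassumption.
  split; first by move=> a f; apply: qnormZ; eassumption.
  by move=> f g; apply: qnormD; eassumption.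
- by apply: spher; eassumption.
- split; first by move=> x; exists (nE x).
  split; last by move=> x; apply: qnorm_diag; eassumption.
  move=> a x y; have := c0_0 _ _ _ _ _ Hn.
  by congr (c0 nE _); apply: funext => n; rewrite /diag subrr.
Qed.
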